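(* For every sufficiently large integer $m$ there exists a bipartite graph $H$ with an odd number of edges, maximum degree at most $102$, and vertex classes $A_1\cup A_2$ and $B_1\cup B_2$ (with $A_1,A_2,B_1,B_2$ pairwise disjoint), where $|A_1|=|B_1|=2m$ and $|A_2|=|B_2|=5m$, such that for every $A_1'\subseteq A_1$ and $B_1'\subseteq B_1$ with $|A_1'|=|B_1'|\ge m$, there is a perfect matching in $H$ between $A_1'\cup A_2$ and $B_1'\cup B_2$. *)

(* Defs.v *)
From mathcomp Require Import all_boot.
Set Implicit Arguments. Unset Strict Implicit. Unset Printing Implicit Defensive.

Definition ldeg (X Y : finType) (E : {set X * Y}) (x : X) : nat :=
  #|[set y : Y | (x, y) \in E]|.
Definition rdeg (X Y : finType) (E : {set X * Y}) (y : Y) : nat :=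
  #|[set x : X | (x, y) \in E]|.

Definition max_deg_le (X Y : finType) (E : {set X * Y}) (d : nat) : Prop :=
  (forall x, ldeg E x <= d) /\ (forall y, rdeg E y <= d).

Definition perfect_matching_between (X Y : finType) (E : {set X * Y})
    (S : {set X}) (T : {set Y}) (M : {set X * Y}) : Prop :=
  [/\ M \subset E,
      (forall e, e \in M -> (e.1 \in S) && (e.2 \in T)),
      (forall x, x \in S -> #|[set y : Y | (x, y) \in M]| = 1) &
      (forall y, y \in T -> #|[set x : X | (x, y) \in M]| = 1)].

(* Vertex classes: A = A1 + A2 with A1 = 'I_(2m), A2 = 'I_(5m); same for B.
   Injections of subsets of A1 (resp. B1) and all of A2 (resp. B2). *)
Definition side (m : nat) : finType := ('I_(2 * m) + 'I_(5 * m))%type.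

Definition lift_side (m : nat) (S1 : {set 'I_(2 * m)}) : {set side m} :=
  [set v : side m | match v with inl a => a \in S1 | inr _ => true end].

(* Main.v *)
Require Import Defs.
From mathcomp Require Import all_boot all_fingroup zify.
From mathcomp Require Import ssralg ring.
Set Implicit Arguments. Unset Strict Implicit. Unset Printing Implicit Defensive.

Lemma lexp m n e : m <= n -> m ^ e <= n ^ e.
Proof. move=> h; elim: e => // e IH; rewrite !expnS leq_mul //. Qed.

Lemma geo_sum n (x : nat -> nat) M :
  (forall i, i < n -> x i * 2 ^ i.+1 <= M) ->
  (\sum_(i < n) x i) * 2 ^ n + M <= M * 2 ^ n.
Proof.
elim: n => [|n IH] h; first by rewrite big_ord0 mul0n add0n expn0 muln1.
rewrite big_ord_recr /= mulnDl.
have h1 := IH (fun i hi => h i (ltnW hi)).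
have h2 := h n (ltnSn n).
rewrite !expnS in h2 *.
set P := 2 ^ n in h1 h2 *; set S := \sum_(i < n) x i in h1 *.
lia.
Qed.

Lemma ffact_le_exp n k : n ^_ k <= n ^ k.
Proof.
elim: k n => [|k IH] n //; rewrite ffactnS expnS leq_mul //.
apply: leq_trans (IH _) _; apply: lexp; exact: leq_pred.
Qed.

Lemma fact_ge0 k : 0 < k`!. Proof. exact: fact_gt0. Qed.

Lemma succ_pow k : (k.+1) ^ k <= 3 * k ^ k.
Proof.
case: k => [|k] //.
set K := k.+1.
have HK : 0 < K by [].
rewrite -addn1 expnDn.
pose x (i : nat) := 'C(K, i.+1) * (K ^ (K - i.+1) * 1 ^ i.+1).
rewrite big_ord_recl /= bin0 subn0 exp1n !mul1n muln1.
have hx : forall i, i < K -> x i * 2 ^ i.+1 <= 2 * K ^ K.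
  move=> i hi; rewrite /x exp1n muln1.
  have h1 : 'C(K, i.+1) * (i.+1)`! <= K ^ i.+1.
    by rewrite bin_ffact ffact_le_exp.
  have h2 : 2 ^ i.+1 <= 2 * (i.+1)`!.
    elim: i {hi h1} => [|i IH] //.
    rewrite expnS factS; apply: leq_trans (leq_mul (leqnn 2) IH) _.
    nia.
  apply: leq_trans (_ : 'C(K, i.+1) * K ^ (K - i.+1) * (2 * (i.+1)`!) <= _).
    by rewrite leq_mul2l h2 orbT.
  have -> : 'C(K, i.+1) * K ^ (K - i.+1) * (2 * (i.+1)`!) =
            2 * (K ^ (K - i.+1) * ('C(K, i.+1) * (i.+1)`!)) by ring.
  rewrite leq_mul2l /=.
  apply: leq_trans (leq_mul (leqnn _) h1) _.
  by rewrite -expnD subnK.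
have := geo_sum hx.
set S := \sum_(i < K) _.
have -> : S = \sum_(i < K) x i by apply: eq_bigr => i _; rewrite /x.
move=> g.
have p2 : 0 < 2 ^ K by rewrite expn_gt0.
have : (\sum_(i < K) x i) * 2 ^ K <= 2 * K ^ K * 2 ^ K by lia.
rewrite leq_pmul2r // => hs.
lia.
Qed.

Lemma pow_le_fact k : k ^ k <= 3 ^ k * k`!.
Proof.
elim: k => [|k IH] //.
rewrite expnS factS.
apply: leq_trans (leq_mul (leqnn _) (succ_pow k)) _.
have -> : 3 ^ k.+1 * (k.+1 * k`!) = k.+1 * (3 * (3 ^ k * k`!)) by rewrite expnS; ring.
by rewrite leq_mul2l leq_mul2l IH !orbT.
Qed.

Lemma entropy n k : 'C(n, k) * k ^ k <= 3 ^ k * n ^ k.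
Proof.
apply: leq_trans (leq_mul (leqnn _) (pow_le_fact k)) _.
rewrite mulnCA leq_mul2l bin_ffact ffact_le_exp orbT //.
Qed.

Lemma ffact_ratio j n s : j <= n -> j ^_ s * n ^ s <= n ^_ s * j ^ s.
Proof.
elim: s j n => [|s IH] j n hjn //.
rewrite !ffactnSr !expnSr.
have -> : j ^_ s * (j - s) * (n ^ s * n) = (j ^_ s * n ^ s) * ((j - s) * n) by ring.
have -> : n ^_ s * (n - s) * (j ^ s * j) = (n ^_ s * j ^ s) * ((n - s) * j) by ring.
apply: leq_mul; first exact: IH.
have [hs|hs] := leqP s j.
  nia.
by have -> : j - s = 0 by lia.
Qed.

Lemma bin_ratio j n s : j <= n -> 'C(j, s) * n ^ s <= 'C(n, s) * j ^ s.
Proof.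
move=> h; rewrite -(leq_pmul2r (fact_gt0 s)).
have -> : 'C(j, s) * n ^ s * s`! = ('C(j, s) * s`!) * n ^ s by ring.
have -> : 'C(n, s) * j ^ s * s`! = ('C(n, s) * s`!) * j ^ s by ring.
by rewrite !bin_ffact ffact_ratio.
Qed.


Lemma base_ineq : 3 ^ 3 * 2 ^ 62 <= 5 ^ 30.
Proof.
have e1 : forall x, x ^ 2 * (x ^ 10) ^ 6 = x ^ 62 by move=> x; rewrite -expnM -expnD.
have e2 : forall x, (x ^ 5) ^ 6 = x ^ 30 by move=> x; rewrite -expnM.
rewrite -(e1 2) -(e2 5) mulnA.
apply: (@leq_trans (3 ^ 6 * (2 ^ 10) ^ 6)); first by rewrite leq_mul2r.
rewrite -expnMn; apply: lexp; by [].
Qed.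

Lemma const_ineq : 3 ^ 2 * 2 ^ 64 <= 5 ^ 31.
Proof.
have e1 : forall x, x ^ 4 * (x ^ 10) ^ 6 = x ^ 64 by move=> x; rewrite -expnM -expnD.
have e2 : forall x, x * (x ^ 5) ^ 6 = x ^ 31 by move=> x; rewrite -expnM -expnS.
rewrite -(e1 2) -(e2 5) mulnA.
apply: (@leq_trans (5 * 3 ^ 6 * (2 ^ 10) ^ 6)); first by rewrite leq_mul2r.
rewrite -mulnA leq_mul2l /= -expnMn; apply: lexp; by [].
Qed.

Lemma C_ineq r : 3 ^ (3 * r + 2) * 2 ^ (62 * r + 64) <= 5 ^ (30 * r + 31).
Proof.
rewrite (expnD 3 (3 * r) 2) (expnD 2 (62 * r) 64) (expnD 5 (30 * r) 31).
rewrite (expnM 3 3 r) (expnM 2 62 r) (expnM 5 30 r).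
rewrite mulnACA -expnMn.
apply: leq_mul; last exact: const_ineq.
apply: lexp; exact: base_ineq.
Qed.

Lemma star N s : 0 < s -> 5 * s <= 2 * N ->
  'C(N, s) * 'C(N, s.*2.-1) * 2 ^ s * (s.*2.-1) ^ (33 * s) <= N ^ (33 * s).
Proof.
case: s => [//|r] _ h5.
set s := r.+1.
have -> : s.*2.-1 = r.*2.+1 by rewrite /s doubleS.
set j := r.*2.+1.
set a := 'C(N, s); set b := 'C(N, j).
have H1 := entropy N s. have H2 := entropy N j.
set q := 31 * r + 32. set e := 30 * r + 31.
have hjq : j ^ q <= 2 ^ q * s ^ q by rewrite -expnMn; apply: lexp; rewrite /j /s; lia.
have hse : 5 ^ e * s ^ e <= 2 ^ e * N ^ e by rewrite -!expnMn; apply: lexp.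
have E33 : 33 * s = j + q by rewrite /s /j /q; lia.
have Eq : q = s + e by rewrite /s /q /e; lia.
have hC := C_ineq r.
have Es : s + j = 3 * r + 2 by rewrite /s /j; lia.
have Eq2 : s + q + e = 62 * r + 64 by rewrite /s /q /e; lia.
have Epos : 0 < s ^ s * 5 ^ e by rewrite muln_gt0 !expn_gt0.
rewrite -(leq_pmul2r Epos).
rewrite E33 expnD.
apply: (@leq_trans ((a * s ^ s) * (b * j ^ j) * 2 ^ s * (2 ^ q * s ^ q) * 5 ^ e)).
  have -> : a * b * 2 ^ s * (j ^ j * j ^ q) * (s ^ s * 5 ^ e) =
            (a * s ^ s) * (b * j ^ j) * 2 ^ s * j ^ q * 5 ^ e by ring.
  by rewrite leq_mul2r leq_mul2l hjq !orbT.
apply: (@leq_trans ((3 ^ s * N ^ s) * (3 ^ j * N ^ j) * 2 ^ s * (2 ^ q * s ^ q) * 5 ^ e)).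
  by rewrite !leq_mul2r (leq_mul H1 H2) !orbT.
rewrite Eq expnD [s ^ (s + e)]expnD.
have -> : 3 ^ s * N ^ s * (3 ^ j * N ^ j) * 2 ^ s * (2 ^ s * 2 ^ e * (s ^ s * s ^ e)) * 5 ^ e
   = (3 ^ (s + j) * 2 ^ (s + s + e)) * N ^ (s + j) * s ^ s * (5 ^ e * s ^ e).
  by rewrite !expnD; ring.
apply: (@leq_trans ((3 ^ (s + j) * 2 ^ (s + s + e)) * N ^ (s + j) * s ^ s * (2 ^ e * N ^ e))).
  by rewrite leq_mul2l hse orbT.
have -> : 3 ^ (s + j) * 2 ^ (s + s + e) * N ^ (s + j) * s ^ s * (2 ^ e * N ^ e)
   = (3 ^ (s + j) * 2 ^ (s + s + e + e)) * (N ^ (s + j) * N ^ e * s ^ s) by rewrite !expnD; ring.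
have -> : N ^ (j + (s + e)) * (s ^ s * 5 ^ e) = 5 ^ e * (N ^ (s + j) * N ^ e * s ^ s).
  have E : j + (s + e) = s + j + e by lia.
  by rewrite E !expnD; ring.
rewrite leq_mul2r; apply/orP; right.
rewrite Es.
have -> : s + s + e + e = 62 * r + 64 by rewrite -Eq2 Eq; lia.
exact: hC.
Qed.


Section PermCount.
Variable T : finType.

Lemma perm_map_set (K K' : {set T}) : #|K| = #|K'| -> exists t : {perm T}, t @: K = K'.
Proof.
move=> hK.
have mk : forall A : {set T}, [/\ uniq (enum A ++ enum (~: A)),
    forall x, x \in enum A ++ enum (~: A) & size (enum A ++ enum (~: A)) = #|T|].
  move=> A; split.
  - rewrite cat_uniq !enum_uniq /= andbT; apply/hasPn => x.
    by rewrite !mem_enum inE => ->.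
  - by move=> x; rewrite mem_cat !mem_enum inE; case: (x \in A).
  - by rewrite size_cat -!cardE cardsC.
have [ue me se] := mk K; have [ue' me' se'] := mk K'.
set e := enum K ++ enum (~: K) in ue me se.
set e' := enum K' ++ enum (~: K') in ue' me' se'.
pose f x := nth x e' (index x e).
have ie : forall x, index x e < size e' by move=> x; rewrite se' -se index_mem.
have finj : injective f.
  move=> x y; rewrite /f (set_nth_default x y (ie y)) => /eqP.
  rewrite nth_uniq // => /eqP hi.
  by rewrite -(nth_index x (me x)) hi nth_index.
exists (perm finj).
apply/eqP; rewrite eqEcard card_imset; last exact: perm_inj.
rewrite hK leqnn andbT.
apply/subsetP => _ /imsetP [x xK ->]; rewrite permE /f.
have xe : x \in enum K by rewrite mem_enum.
rewrite /e index_cat xe /e' nth_cat.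
have hi : index x (enum K) < size (enum K').
  by move: (hK); rewrite !cardE => <-; rewrite index_mem.
by rewrite hi -(mem_enum (mem K')) mem_nth.
Qed.

Definition gcnt (I K : {set T}) := #|[set p : {perm T} | p @: I == K]|.

Lemma gcnt_le (I K1 K2 : {set T}) : #|K1| = #|K2| -> gcnt I K1 <= gcnt I K2.
Proof.
move=> h; have [t ht] := perm_map_set h.
have tinj : injective (fun p : {perm T} => p * t)%g.
  move=> p q /= /permP hpq; apply/permP => x; have := hpq x; rewrite !permM.
  exact: perm_inj.
rewrite /gcnt -(card_imset _ tinj); apply: subset_leq_card.
apply/subsetP => _ /imsetP [p + ->]; rewrite !inE => /eqP hp.
apply/eqP; rewrite -ht -hp -imset_comp; apply: eq_imset => x /=; by rewrite permM.
Qed.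

Lemma gcnt_eq (I K1 K2 : {set T}) : #|K1| = #|K2| -> gcnt I K1 = gcnt I K2.
Proof. by move=> h; apply/eqP; rewrite eqn_leq !gcnt_le. Qed.

Lemma card_allperm : #|{perm T}| = #|T|`!.
Proof.
rewrite -cardsT -card_perm; apply: eq_card => p; rewrite !inE.
by apply/esym/subsetP => x; rewrite inE.
Qed.

Lemma sum_gcnt (I : {set T}) (P : {set T} -> bool) :
  \sum_(K : {set T} | P K && (#|K| == #|I|)) gcnt I K =
  #|[set p : {perm T} | P (p @: I)]|.
Proof.
rewrite -sum1dep_card (partition_big (fun p : {perm T} => p @: I)
   (fun K : {set T} => P K && (#|K| == #|I|))) /=; last first.
  by move=> p hp; rewrite hp card_imset ?eqxx //; exact: perm_inj.
apply: eq_bigr => K /andP [hK _].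
rewrite sum1dep_card /gcnt; apply: eq_card => p; rewrite !inE.
by case: (p @: I =P K) => [->|_]; rewrite ?hK ?andbF.
Qed.

Lemma gcnt_total (I : {set T}) : gcnt I I * 'C(#|T|, #|I|) = #|T|`!.
Proof.
rewrite -card_allperm.
have := sum_gcnt I (fun _ => true).
under eq_bigr => K /= hK do rewrite (gcnt_eq I (eqP hK)).
rewrite sum_nat_cond_const.
have -> : #|[set K : {set T} | true && (#|K| == #|I|)]| = 'C(#|T|, #|I|).
  by rewrite -card_draws; apply: eq_card => K; rewrite !inE.
rewrite mulnC => ->.
by apply: eq_card => p; rewrite !inE.
Qed.

Lemma fcnt (I J : {set T}) :
  #|[set p : {perm T} | p @: I \subset J]| * 'C(#|T|, #|I|) = 'C(#|J|, #|I|) * #|T|`!.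
Proof.
rewrite -(sum_gcnt I (fun K => K \subset J)).
under eq_bigr => K /andP [_ hK] do rewrite (gcnt_eq I (eqP hK)).
rewrite sum_nat_cond_const -mulnA gcnt_total.
congr (_ * _).
have := cards_draws J #|I|.
move=> <-; apply: eq_card => K; by rewrite !inE.
Qed.
End PermCount.


Lemma per_s_bound N s f : 0 < s -> 5 * s <= 2 * N ->
  f * 'C(N, s) = 'C(s.*2.-1, s) * N`! ->
  'C(N, s) * 'C(N, s.*2.-1) * 2 ^ s * f ^ 33 <= N`! ^ 33.
Proof.
move=> s0 h5 hf.
set j := s.*2.-1 in hf *.
set c := 'C(N, s).
have sN : s <= N by lia.
have jN : j <= N by rewrite /j; lia.
have c0 : 0 < c by rewrite /c bin_gt0.
have hst := star s0 h5. rewrite -/j -/c in hst.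
have hr := bin_ratio s jN. rewrite -/c in hr.
have hr33 : 'C(j, s) ^ 33 * N ^ (33 * s) <= c ^ 33 * j ^ (33 * s).
  by rewrite (mulnC 33 s) !expnM -!expnMn; apply: lexp.
have P0 : 0 < c ^ 33 * N ^ (33 * s).
  rewrite muln_gt0; apply/andP; split; rewrite expn_gt0 ?c0 //.
  by apply/orP; left; apply: leq_trans s0 sN.
rewrite -(leq_pmul2r P0).
have -> : c * 'C(N, j) * 2 ^ s * f ^ 33 * (c ^ 33 * N ^ (33 * s)) =
          c * 'C(N, j) * 2 ^ s * ((f * c) ^ 33 * N ^ (33 * s)) by rewrite expnMn; ring.
rewrite hf expnMn.
apply: (@leq_trans (c * 'C(N, j) * 2 ^ s * (c ^ 33 * j ^ (33 * s) * N`! ^ 33))).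
  rewrite leq_mul2l; apply/orP; right.
  have -> : 'C(j, s) ^ 33 * N`! ^ 33 * N ^ (33 * s) = ('C(j, s) ^ 33 * N ^ (33 * s)) * N`! ^ 33 by ring.
  by rewrite leq_mul2r hr33 orbT.
have -> : c * 'C(N, j) * 2 ^ s * (c ^ 33 * j ^ (33 * s) * N`! ^ 33) =
          (c * 'C(N, j) * 2 ^ s * j ^ (33 * s)) * (c ^ 33 * N`! ^ 33) by ring.
have -> : N`! ^ 33 * (c ^ 33 * N ^ (33 * s)) = N ^ (33 * s) * (c ^ 33 * N`! ^ 33) by ring.
by rewrite leq_mul2r hst orbT.
Qed.

Lemma sum_by_size (T : finType) (F : {set T} -> nat) :
  \sum_(I : {set T}) F I = \sum_(s < #|T|.+1) \sum_(I : {set T} | #|I| == s) F I.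
Proof.
rewrite (partition_big (fun I : {set T} => (inord #|I| : 'I_(#|T|.+1))) xpredT) //=.
apply: eq_bigr => s _; apply: eq_bigl => I.
have h : #|I| < #|T|.+1 by rewrite ltnS max_card.
by rewrite -(inj_eq val_inj) /= inordK.
Qed.

Lemma final_sum (x : nat -> nat) M K : 0 < M ->
  (forall s, 0 < s -> x s * 2 ^ s <= M) -> x 0 = 0 ->
  \sum_(s < K.+1) x s < M.
Proof.
move=> M0 hx h0.
rewrite big_ord_recl h0 add0n.
have -> : \sum_(i < K) x (bump 0 i) = \sum_(i < K) x i.+1 by apply: eq_bigr.
have g := @geo_sum K (fun i => x i.+1) M (fun i _ => hx i.+1 (ltn0Sn i)).
have p : 0 < 2 ^ K by rewrite expn_gt0.
move: g p; set S := \sum_(i < K) _; set P := 2 ^ K.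
nia.
Qed.


Lemma extend_set (T : finType) (A : {set T}) j : #|A| <= j -> j <= #|T| ->
  exists J : {set T}, A \subset J /\ #|J| = j.
Proof.
move=> h1 h2; have [n hn] : exists n, j = #|A| + n by exists (j - #|A|); lia.
elim: n A h1 hn => [|n IH] A h1 hn.
  by exists A; rewrite hn addn0.
case: (pickP (fun x => x \notin A)) => [x xA | hall]; last first.
  have : #|[set: T]| <= #|A|.
    by apply: subset_leq_card; apply/subsetP => x _; have := hall x; case: (x \in A).
  rewrite cardsT; lia.
have c1 : #|x |: A| = #|A|.+1 by rewrite cardsU1 xA.
have [J [hJ1 hJ2]] := IH (x |: A) (ltac:(lia)) (ltac:(lia)).
by exists J; split => //; apply: subset_trans hJ1; apply: subsetUr.
Qed.

Definition Uset N (sg : {ffun 'I_33 -> {perm 'I_N}}) (I : {set 'I_N}) :=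
  \bigcup_(k < 33) (sg k @: I).

Section Exist.
Variables N t : nat.
Hypothesis h5 : 5 * t <= 2 * N.

Let sT := {ffun 'I_33 -> {perm 'I_N}}.
Definition bad (sg : sT) := [exists I : {set 'I_N}, (#|I| <= t) && (#|Uset sg I| < 2 * #|I|)].
Definition Pij (I J : {set 'I_N}) := [&& 0 < #|I|, #|I| <= t & #|J| == (#|I|).*2.-1].
Definition Bs (I J : {set 'I_N}) := [set sg : sT | [forall k, sg k @: I \subset J]].
Definition Fs s := 'C(s.*2.-1, s) * N`! %/ 'C(N, s).

Lemma bad_cover sg : bad sg -> exists I J, Pij I J && (sg \in Bs I J).
Proof.
case/existsP => I /andP [hI hU].
have hI0 : 0 < #|I| by case: #|I| hU => //; rewrite muln0.
have e1 : #|Uset sg I| <= (#|I|).*2.-1 by lia.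
have e2 : (#|I|).*2.-1 <= #|'I_N| by rewrite card_ord; lia.
have [J [hJ1 hJ2]] := extend_set e1 e2.
exists I, J; rewrite /Pij hI0 hI hJ2 eqxx /= inE.
apply/forallP => k; apply: subset_trans hJ1.
by apply: (bigcup_sup k).
Qed.

Lemma card_Bs I J : #|Bs I J| = #|[set p : {perm 'I_N} | p @: I \subset J]| ^ 33.
Proof.
have := @card_ffun_on 'I_33 _ [set p : {perm 'I_N} | p @: I \subset J].
rewrite card_ord => <-; apply: eq_card => sg.
by rewrite !inE; apply: eq_forallb => k; rewrite !inE.
Qed.

Lemma fcnt_N I J : Pij I J ->
  #|[set p : {perm 'I_N} | p @: I \subset J]| = Fs #|I|.
Proof.
case/and3P => h0 ht /eqP hJ.
rewrite /Fs; have := fcnt I J; rewrite card_ord hJ => <-.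
rewrite mulnK // bin_gt0; lia.
Qed.

Lemma Fs_eq s : 0 < s -> s <= t -> Fs s * 'C(N, s) = 'C(s.*2.-1, s) * N`!.
Proof.
move=> s0 st.
have e1 : #|(set0 : {set 'I_N})| <= s by rewrite cards0.
have e2 : s <= #|'I_N| by rewrite card_ord; lia.
have [I [_ hI]] := extend_set e1 e2.
have e3 : #|(set0 : {set 'I_N})| <= s.*2.-1 by rewrite cards0.
have e4 : s.*2.-1 <= #|'I_N| by rewrite card_ord; lia.
have [J [_ hJ]] := extend_set e3 e4.
have hP : Pij I J by rewrite /Pij hI hJ s0 st eqxx.
have := fcnt I J; rewrite fcnt_N // card_ord hI hJ //.
Qed.

Lemma bad_count : #|[set sg : sT | bad sg]| < #|{: sT}|.
Proof.
apply: (@leq_ltn_trans (\sum_(I : {set 'I_N}) \sum_(J : {set 'I_N}) (Pij I J) * #|Bs I J|)).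
  rewrite -sum1_card.
  apply: (@leq_trans (\sum_(sg in [set sg : sT | bad sg])
       \sum_(I : {set 'I_N}) \sum_(J : {set 'I_N}) (Pij I J && (sg \in Bs I J)))).
    apply: leq_sum => sg; rewrite inE => /bad_cover [I [J hIJ]].
    rewrite (bigD1 I) //= (bigD1 J) //= hIJ.
    by rewrite -addnA leq_addr.
  apply: (@leq_trans (\sum_(sg : sT)
       \sum_(I : {set 'I_N}) \sum_(J : {set 'I_N}) (Pij I J && (sg \in Bs I J)))).
    by rewrite [X in _ <= X](bigID (fun sg => sg \in [set sg : sT | bad sg])) /= leq_addr.
  rewrite exchange_big; apply: leq_sum => I _.
  rewrite exchange_big; apply: leq_sum => J _.
  case: (Pij I J); last by rewrite big1.
  rewrite mul1n -sum1_card [X in _ <= X]big_mkcond /=.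
  by apply: leq_sum => sg _; case: (sg \in Bs I J).
rewrite card_ffun card_ord card_allperm card_ord.
pose g s := (0 < s) && (s <= t).
have step1 : forall I : {set 'I_N}, \sum_(J : {set 'I_N}) Pij I J * #|Bs I J| =
    g #|I| * ('C(N, (#|I|).*2.-1) * Fs #|I| ^ 33).
  move=> I.
  rewrite (bigID (fun J : {set 'I_N} => #|J| == (#|I|).*2.-1)) /=.
  rewrite [X in _ + X]big1 ?addn0; last first.
    by move=> J /negbTE hJ; rewrite /Pij hJ !andbF.
  have -> : \sum_(J : {set 'I_N} | #|J| == (#|I|).*2.-1) Pij I J * #|Bs I J| =
            \sum_(J : {set 'I_N} | #|J| == (#|I|).*2.-1) g #|I| * Fs #|I| ^ 33.
    apply: eq_bigr => J hJ.
    rewrite /g; case hP: (Pij I J).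
      by rewrite card_Bs fcnt_N //; move: hP; rewrite /Pij hJ !andbT => ->.
    by move: hP; rewrite /Pij hJ andbT => ->.
  rewrite sum_nat_cond_const.
  have -> : #|[set J : {set 'I_N} | #|J| == (#|I|).*2.-1]| = 'C(N, (#|I|).*2.-1).
    by rewrite card_draws card_ord.
  by rewrite mulnCA.
under eq_bigr => I _ do rewrite step1.
rewrite sum_by_size card_ord.
have step2 : forall s : 'I_N.+1,
    \sum_(I : {set 'I_N} | #|I| == s) g #|I| * ('C(N, (#|I|).*2.-1) * Fs #|I| ^ 33) =
    'C(N, s) * (g s * ('C(N, s.*2.-1) * Fs s ^ 33)).
  move=> s; rewrite (eq_bigr (fun _ => g s * ('C(N, s.*2.-1) * Fs s ^ 33))); last first.
    by move=> I /eqP ->.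
  by rewrite sum_nat_cond_const card_draws card_ord.
under eq_bigr => s _ do rewrite step2.
apply: (@final_sum (fun s => 'C(N, s) * (g s * ('C(N, s.*2.-1) * Fs s ^ 33)))).
- by rewrite expn_gt0 fact_gt0.
- move=> s s0; rewrite /g s0 /=.
  case: (leqP s t) => hst; last by rewrite muln0 mul0n.
  rewrite mul1n.
  have h5s : 5 * s <= 2 * N by lia.
  have := per_s_bound (f := Fs s) s0 h5s (Fs_eq s0 hst).
  move=> h; apply: leq_trans h; rewrite leq_eqVlt; apply/orP; left; apply/eqP; ring.
- by rewrite /g /= muln0.
Qed.

End Exist.

Lemma exists_good N t : 5 * t <= 2 * N ->
  exists sg : {ffun 'I_33 -> {perm 'I_N}},
    forall I : {set 'I_N}, #|I| <= t -> 2 * #|I| <= #|Uset sg I|.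
Proof.
move=> h5; have hc := bad_count h5.
case: (pickP (fun sg : {ffun 'I_33 -> {perm 'I_N}} => ~~ bad t sg)) => [sg hsg | hall].
  exists sg => I hI; rewrite leqNgt; apply/negP => hlt.
  by move/negP: hsg; apply; apply/existsP; exists I; rewrite hI hlt.
exfalso.
have hh : #|[set: {ffun 'I_33 -> {perm 'I_N}}]| <=
           #|[set sg : {ffun 'I_33 -> {perm 'I_N}} | bad t sg]|.
  apply/subset_leq_card/subsetP => sg _.
  by rewrite inE; have := hall sg; case: (bad t sg).
by move: (leq_ltn_trans hh hc); rewrite cardsT ltnn.
Qed.


Lemma shrink_set (T : finType) (A : {set T}) k : k <= #|A| ->
  exists A' : {set T}, A' \subset A /\ #|A'| = k.
Proof.
move=> hk; have [n hn] : exists n, #|A| = k + n by exists (#|A| - k); lia.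
elim: n A hn hk => [|n IH] A hn hk.
  by exists A; rewrite hn addn0.
have : 0 < #|A| by lia.
case/card_gt0P => x xA.
have c1 : #|A :\ x| = k + n by have := cardsD1 x A; rewrite xA; lia.
have [A' [h1 h2]] := IH (A :\ x) c1 (ltac:(lia)).
by exists A'; split => //; apply: subset_trans h1 (subsetDl _ _).
Qed.

Section Hall.
Variables X Y : finType.
Variable E : {set X * Y}.

Definition NT (T : {set Y}) (A : {set X}) := [set y in T | [exists x in A, (x, y) \in E]].

Lemma pm_single x y : (x, y) \in E ->
  perfect_matching_between E [set x] [set y] [set (x, y)].
Proof.
move=> hxy; split.
- by rewrite sub1set.
- by move=> e; rewrite !inE => /eqP ->; rewrite !eqxx.
- move=> x'; rewrite inE => /eqP ->; apply/eqP/cards1P; exists y.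
  by apply/setP => y'; rewrite !inE xpair_eqE eqxx.
- move=> y'; rewrite inE => /eqP ->; apply/eqP/cards1P; exists x.
  by apply/setP => x'; rewrite !inE xpair_eqE eqxx andbT.
Qed.

Lemma pm_union (S1 S2 : {set X}) (T1 T2 : {set Y}) (M1 M2 : {set X * Y}) :
  [disjoint S1 & S2] -> [disjoint T1 & T2] ->
  perfect_matching_between E S1 T1 M1 -> perfect_matching_between E S2 T2 M2 ->
  perfect_matching_between E (S1 :|: S2) (T1 :|: T2) (M1 :|: M2).
Proof.
move=> dS dT [sM1 eM1 rM1 cM1] [sM2 eM2 rM2 cM2]; split.
- by rewrite subUset sM1 sM2.
- move=> e; rewrite inE => /orP [/eM1 | /eM2] /andP [h1 h2]; by rewrite !inE h1 h2 ?orbT.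
- move=> x; rewrite inE => /orP [xS | xS].
  + rewrite -(rM1 x xS); apply: eq_card => y; rewrite !inE.
    case h: ((x, y) \in M2) => //; last by rewrite orbF.
    move: (eM2 _ h) => /andP [/= xS2 _].
    by move: dS; rewrite disjoints_subset => /subsetP /(_ x xS); rewrite inE xS2.
  + rewrite -(rM2 x xS); apply: eq_card => y; rewrite !inE.
    case h: ((x, y) \in M1) => //=.
    move: (eM1 _ h) => /andP [/= xS1 _].
    by move: dS; rewrite disjoints_subset => /subsetP /(_ x xS1); rewrite inE xS.
- move=> y; rewrite inE => /orP [yT | yT].
  + rewrite -(cM1 y yT); apply: eq_card => x; rewrite !inE.
    case h: ((x, y) \in M2) => //; last by rewrite orbF.
    move: (eM2 _ h) => /andP [_ /= yT2].
    by move: dT; rewrite disjoints_subset => /subsetP /(_ y yT); rewrite inE yT2.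
  + rewrite -(cM2 y yT); apply: eq_card => x; rewrite !inE.
    case h: ((x, y) \in M1) => //=.
    move: (eM1 _ h) => /andP [_ /= yT1].
    by move: dT; rewrite disjoints_subset => /subsetP /(_ y yT1); rewrite inE yT.
Qed.

Lemma NT_mono (T : {set Y}) (A B : {set X}) : A \subset B -> NT T A \subset NT T B.
Proof.
move=> /subsetP hAB; apply/subsetP => y; rewrite !inE => /andP [-> /existsP [x /andP [xA h]]].
by apply/existsP; exists x; rewrite hAB.
Qed.

Theorem hall_thm (S : {set X}) (T : {set Y}) : #|S| = #|T| ->
  (forall A : {set X}, A \subset S -> #|A| <= #|NT T A|) ->
  exists M, perfect_matching_between E S T M.
Proof.
have [n hn] := ubnP #|S|.
elim: n S T hn => // n IH S T hn hST hH.
case: (set_0Vmem S) => [S0 | [x xS]].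
  have T0 : T = set0 by apply/eqP; rewrite -cards_eq0 -hST S0 cards0.
  exists set0; rewrite S0 T0; split.
  - exact: sub0set.
  - by move=> e; rewrite inE.
  - by move=> x; rewrite inE.
  - by move=> y; rewrite inE.
case: (pickP (fun A : {set X} => [&& A \subset S, 0 < #|A|, A != S & #|NT T A| <= #|A|]))
  => [A | notight].
  case/and4P => AS A0 AnS hNA.
  set N := NT T A.
  have NA : #|N| = #|A| by apply/eqP; rewrite eqn_leq hNA hH.
  have NT_sub : N \subset T by apply/subsetP => y; rewrite inE => /andP [].
  have hAS : #|A| < #|S| by rewrite proper_card // properEneq AnS AS.
  have [M1 pm1] : exists M1, perfect_matching_between E A N M1.
    apply: (IH A N) => //; first by lia.
    move=> B BA.
    have -> : NT N B = NT T B.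
      apply/setP => y; rewrite !inE; apply/andP/andP => [[/andP [yT _] h] | [yT h]] //.
      split => //; rewrite yT /=; move: h => /existsP [x' /andP [x'B e]].
      by apply/existsP; exists x'; rewrite (subsetP BA).
    by apply: hH; apply: subset_trans BA AS.
  have [M2 pm2] : exists M2, perfect_matching_between E (S :\: A) (T :\: N) M2.
    apply: IH.
    - rewrite cardsD (setIidPr AS); lia.
    - by rewrite !cardsD (setIidPr AS) (setIidPr NT_sub) hST NA.
    move=> B BSA.
    have dAB : [disjoint A & B].
      rewrite disjoint_sym disjoints_subset; apply: subset_trans BSA _.
      by apply/subsetP => z; rewrite !inE => /andP [].
    have : #|A :|: B| <= #|N| + #|NT (T :\: N) B|.
      apply: leq_trans (hH (A :|: B) _) _.
        rewrite subUset AS; apply: subset_trans BSA _; exact: subsetDl.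
      apply: leq_trans (leq_card_setU _ _); apply: subset_leq_card.
      apply/subsetP => y; rewrite /NT inE => /andP [yT /existsP [z /andP [zAB e]]].
      rewrite inE; apply/orP.
      case yN : (y \in N); [by left | right].
      rewrite /NT inE in_setD yN yT /=.
      apply/existsP; exists z; rewrite e andbT.
      move: zAB; rewrite inE => /orP [zA | //].
      move/negbT: yN => /negP; case.
      by rewrite /N /NT inE yT /=; apply/existsP; exists z; rewrite zA.
    rewrite cardsU (_ : A :&: B = set0) ?cards0 ?subn0; last first.
      by apply/eqP; rewrite setI_eq0.
    rewrite NA; lia.
  exists (M1 :|: M2).
  have -> : S = A :|: (S :\: A) by rewrite setDE setUIr setUCr setIT (setUidPr AS).
  have -> : T = N :|: (T :\: N) by rewrite setDE setUIr setUCr setIT (setUidPr NT_sub).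
  apply: pm_union => //.
  - by rewrite disjoints_subset; apply/subsetP => z zA; rewrite in_setC in_setD zA.
  - by rewrite disjoints_subset; apply/subsetP => z zA; rewrite in_setC in_setD zA.
have hx : 0 < #|NT T [set x]|.
  by apply: leq_trans (hH [set x] _); rewrite ?cards1 ?sub1set.
case/card_gt0P: hx => y; rewrite /NT inE => /andP [yT /existsP [x' /andP [x'x e]]].
move: x'x e; rewrite inE => /eqP -> e.
have cS := cardsD1 x S; have cT := cardsD1 y T; rewrite xS in cS; rewrite yT in cT.
have [M' pm'] : exists M', perfect_matching_between E (S :\ x) (T :\ y) M'.
  apply: IH; [lia | lia |].
  move=> B BS.
  case: (set_0Vmem B) => [-> | [b bB]]; first by rewrite cards0.
  have BS' : B \subset S by apply: subset_trans BS (subsetDl _ _).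
  have BnS : B != S.
    apply/eqP => hB; move/subsetP: BS => /(_ x); rewrite hB xS => /(_ isT).
    by rewrite !inE eqxx.
  have B0 : 0 < #|B| by apply/card_gt0P; exists b.
  have := notight B; rewrite BS' B0 BnS /= => /negbT; rewrite -ltnNge => hlt.
  apply: leq_trans (_ : #|NT T B :\ y| <= _).
    have := cardsD1 y (NT T B); case: (y \in NT T B); lia.
  apply: subset_leq_card; apply/subsetP => z; rewrite /NT !inE.
  by case/andP => -> /andP [-> ->].
exists ([set (x, y)] :|: M').
rewrite -(setD1K xS) -(setD1K yT).
apply: (pm_union _ _ (pm_single e) pm').
- by rewrite disjoints_subset sub1set !inE eqxx.
- by rewrite disjoints_subset sub1set !inE eqxx.
Qed.

Definition NS (S : {set X}) (B : {set Y}) := [set x in S | [exists y in B, (x, y) \in E]].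

Lemma hall2 (S : {set X}) (T : {set Y}) h :
  #|S| = #|T| -> #|S| <= 2 * h ->
  (forall A : {set X}, A \subset S -> #|A| <= h -> #|A| <= #|NT T A|) ->
  (forall B : {set Y}, B \subset T -> #|B| <= h -> #|B| <= #|NS S B|) ->
  forall A : {set X}, A \subset S -> #|A| <= #|NT T A|.
Proof.
move=> hST hS2 HA HB A AS.
rewrite leqNgt; apply/negP => hlt.
have [hAh | hAh] := leqP #|A| h; first by move: (HA A AS hAh); lia.
have [A' [A'A hA']] := shrink_set (ltnW hAh).
have hN : h <= #|NT T A|.
  rewrite -hA'; apply: leq_trans (HA A' (subset_trans A'A AS) _) _; first by rewrite hA'.
  by apply: subset_leq_card; apply: NT_mono.
set B := T :\: NT T A.
have NTsub : NT T A \subset T by apply/subsetP => y; rewrite /NT inE => /andP [].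
have cB : #|B| = #|T| - #|NT T A| by rewrite cardsD (setIidPr NTsub).
have BT : B \subset T by apply: subsetDl.
have h3 : #|B| <= h by rewrite cB; lia.
have h4 := HB B BT h3.
have h5 : #|NS S B| <= #|S :\: A|.
  apply: subset_leq_card; apply/subsetP => x; rewrite /NS !inE => /andP [xS /existsP [y /andP [yB e]]].
  rewrite xS andbT; apply/negP => xA.
  move: yB; rewrite /B !inE => /andP [/negP yN yT]; apply: yN.
  by rewrite ?yT /=; apply/existsP; exists x; rewrite xA.
have hNT := subset_leq_card NTsub.
have hAS := subset_leq_card AS.
move: h4 h5; rewrite cB cardsD (setIidPr AS); lia.
Qed.

End Hall.


Lemma le25 m : 2 * m <= 5 * m. Proof. lia. Qed.

Section Main.
Variable m : nat.

Definition idx (v : side m) : 'I_(5 * m) :=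
  match v with inl i => widen_ord (le25 m) i | inr j => j end.

Definition isl (v : side m) : bool := if v is inl _ then true else false.

Lemma idx_inj : injective (fun v : side m => (isl v, idx v)).
Proof.
move=> [a|a] [b|b] //= [] h.
  by congr inl; apply: val_inj; exact: h.
by rewrite h.
Qed.

Lemma idx_card (P : {set 'I_(5 * m)}) : #|[set y : side m | idx y \in P]| <= 2 * #|P|.
Proof.
rewrite -(card_imset _ idx_inj).
apply: leq_trans (_ : #|setX [set: bool] P| <= _); last by rewrite cardsX cardsT card_bool.
apply: subset_leq_card; apply/subsetP => _ /imsetP [y + ->].
by rewrite !inE.
Qed.

Lemma inr_inj : injective (fun j : 'I_(5 * m) => (inr j : side m)).
Proof. by move=> a b []. Qed.

Lemma inl_inj : injective (fun j : 'I_(2 * m) => (inl j : side m)).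
Proof. by move=> a b []. Qed.

Lemma card_lift (A : {set 'I_(2 * m)}) : #|lift_side A| = #|A| + 5 * m.
Proof.
have -> : lift_side A = [set (inl a : side m) | a in A] :|: [set (inr b : side m) | b : 'I_(5 * m)].
  apply/setP => [[a|b]]; rewrite !inE.
    rewrite (mem_imset _ _ inl_inj).
    have -> : ((inl a : side m) \in [set (inr b : side m) | b : 'I_(5 * m)]) = false.
      by apply/negbTE/imsetP => [[b _]].
    by rewrite orbF.
  by rewrite (mem_imset _ _ inr_inj) orbT.
rewrite cardsU.
have -> : [set (inl a : side m) | a in A] :&: [set (inr b : side m) | b : 'I_(5 * m)] = set0.
  apply/setP => v; rewrite !inE; apply/negbTE/andP => [[/imsetP [a _ ->] /imsetP [b _]]] //.
rewrite cards0 subn0 !card_imset //; last exact: inl_inj; last exact: inr_inj.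
by rewrite card_ord.
Qed.

Definition good (sg : {ffun 'I_33 -> {perm 'I_(5 * m)}}) :=
  forall I : {set 'I_(5 * m)}, #|I| <= 2 * m -> 2 * #|I| <= #|Uset sg I|.

Lemma Uset_mono sg (I J : {set 'I_(5 * m)}) : I \subset J -> Uset sg I \subset Uset sg J.
Proof.
move=> hIJ; apply/bigcupsP => k _; apply: subset_trans (imsetS _ hIJ) _.
exact: (bigcup_sup k).
Qed.

Lemma expand sg (hg : good sg) (C : {set side m}) :
  #|C| <= 4 * m -> #|C| <= #|Uset sg (idx @: C)|.
Proof.
move=> hC.
have h1 : #|C| <= 2 * #|idx @: C|.
  apply: leq_trans (idx_card _); apply: subset_leq_card; apply/subsetP => y yC.
  by rewrite inE imset_f.
case: (leqP #|idx @: C| (2 * m)) => hI.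
  exact: leq_trans h1 (hg _ hI).
have [I' [I'I hI']] := shrink_set (ltnW hI).
have h2 := hg I' (eq_leq hI').
have h3 := subset_leq_card (Uset_mono sg I'I).
rewrite hI' in h2; lia.
Qed.

Definition E0 (sg tg : {ffun 'I_33 -> {perm 'I_(5 * m)}}) : {set side m * side m} :=
  [set e | [exists k, e.2 == inr (sg k (idx e.1))] || [exists k, e.1 == inr (tg k (idx e.2))]].

Lemma ldeg_E0 sg tg x : #|[set y | (x, y) \in E0 sg tg]| <= 99.
Proof.
apply: (@leq_trans #|[set (inr (sg k (idx x)) : side m) | k : 'I_33] :|:
    [set y : side m | idx y \in [set (tg k)^-1%g (idx x) | k : 'I_33]]|).
  apply: subset_leq_card; apply/subsetP => y; rewrite !inE /= => /orP [/existsP [k /eqP ->] | /existsP [k /eqP hx]].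
    by apply/orP; left; apply/imsetP; exists k.
  apply/orP; right; apply/imsetP; exists k => //.
  by rewrite hx /= permK.
apply: leq_trans (leq_card_setU _ _) _.
have c1 : #|[set (inr (sg k (idx x)) : side m) | k : 'I_33]| <= 33.
  by apply: leq_trans (leq_imset_card _ _) _; rewrite card_ord.
have c2 := idx_card [set (tg k)^-1%g (idx x) | k : 'I_33].
have c3 : #|[set (tg k)^-1%g (idx x) | k : 'I_33]| <= 33.
  by apply: leq_trans (leq_imset_card _ _) _; rewrite card_ord.
lia.
Qed.

Lemma rdeg_E0 sg tg y : #|[set x | (x, y) \in E0 sg tg]| <= 99.
Proof.
apply: (@leq_trans #|[set (inr (tg k (idx y)) : side m) | k : 'I_33] :|:
    [set x : side m | idx x \in [set (sg k)^-1%g (idx y) | k : 'I_33]]|).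
  apply: subset_leq_card; apply/subsetP => x; rewrite !inE /= => /orP [/existsP [k /eqP hy] | /existsP [k /eqP ->]].
    apply/orP; right; apply/imsetP; exists k => //.
    by rewrite hy /= permK.
  by apply/orP; left; apply/imsetP; exists k.
apply: leq_trans (leq_card_setU _ _) _.
have c1 : #|[set (inr (tg k (idx y)) : side m) | k : 'I_33]| <= 33.
  by apply: leq_trans (leq_imset_card _ _) _; rewrite card_ord.
have c2 := idx_card [set (sg k)^-1%g (idx y) | k : 'I_33].
have c3 : #|[set (sg k)^-1%g (idx y) | k : 'I_33]| <= 33.
  by apply: leq_trans (leq_imset_card _ _) _; rewrite card_ord.
lia.
Qed.

End Main.


Theorem mainTheorem7 :
  exists m0 : nat, forall m : nat, m0 <= m ->
    exists E : {set side m * side m},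
      [/\ odd #|E|,
          max_deg_le E 102 &
          forall (A1' B1' : {set 'I_(2 * m)}),
            #|A1'| = #|B1'| -> m <= #|A1'| ->
            exists M : {set side m * side m},
              perfect_matching_between E (lift_side A1') (lift_side B1') M].
Proof.
exists 1 => m hm.
have h52 : 5 * (2 * m) <= 2 * (5 * m) by lia.
have [sg hsg] := exists_good h52.
have [tg htg] := exists_good h52.
have hm2 : 0 < 2 * m by lia.
pose i0 : 'I_(2 * m) := Ordinal hm2.
pose e0 : side m * side m := (inl i0, inl i0).
set F := E0 sg tg.
have e0F : e0 \notin F.
  rewrite inE /=; apply/norP; split; apply/negP => /existsP [k] //.
set E := if odd #|F| then F else e0 |: F.
have sub1 : F \subset E by rewrite /E; case: ifP => _; [exact: subxx | exact: subsetUr].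
have sub2 : E \subset e0 |: F by rewrite /E; case: ifP => _; [exact: subsetUr | exact: subxx].
exists E; split.
- rewrite /E; case: ifP => // ho.
  by rewrite cardsU1 e0F add1n /= ho.
- split.
  + move=> x; rewrite /ldeg.
    apply: (@leq_trans #|[set inl i0 : side m] :|: [set y | (x, y) \in F]|).
      apply: subset_leq_card; apply/subsetP => y; rewrite inE => /(subsetP sub2).
      rewrite !inE => /orP [/eqP [_ ->] | ->]; by rewrite ?eqxx ?orbT.
    apply: leq_trans (leq_card_setU _ _) _; rewrite cards1.
    by have := ldeg_E0 sg tg x; rewrite -/F; lia.
  + move=> y; rewrite /rdeg.
    apply: (@leq_trans #|[set inl i0 : side m] :|: [set x | (x, y) \in F]|).
      apply: subset_leq_card; apply/subsetP => x; rewrite inE => /(subsetP sub2).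
      rewrite !inE => /orP [/eqP [-> _] | ->]; by rewrite ?eqxx ?orbT.
    apply: leq_trans (leq_card_setU _ _) _; rewrite cards1.
    by have := rdeg_E0 sg tg y; rewrite -/F; lia.
- move=> A1' B1' hAB _.
  have cST : #|lift_side A1'| = #|lift_side B1'| by rewrite !card_lift hAB.
  apply: hall_thm => //.
  apply: (@hall2 _ _ _ _ _ (4 * m)) => //.
  + rewrite card_lift; have := subset_leq_card (subsetT A1'); rewrite cardsT card_ord; lia.
  + move=> A AS hA; apply: leq_trans (expand hsg hA) _.
    rewrite -(card_imset _ (@inr_inj m)); apply: subset_leq_card.
    apply/subsetP => _ /imsetP [z /bigcupP [k _ /imsetP [w /imsetP [x xA ->] ->]] ->].
    rewrite /NT !inE /=; apply/existsP; exists x; rewrite xA /=.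
    by apply: (subsetP sub1); rewrite inE /=; apply/orP; left; apply/existsP; exists k.
  + move=> B BT hB; apply: leq_trans (expand htg hB) _.
    rewrite -(card_imset _ (@inr_inj m)); apply: subset_leq_card.
    apply/subsetP => _ /imsetP [z /bigcupP [k _ /imsetP [w /imsetP [y yB ->] ->]] ->].
    rewrite /NS !inE /=; apply/existsP; exists y; rewrite yB /=.
    by apply: (subsetP sub1); rewrite inE /=; apply/orP; right; apply/existsP; exists k.
Qed.
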